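(* Let $C$ be a copula and $p_0,q_0,q\in[0,1]$ with $q\neq q_0$. If $\lambda^C(q_0|p_0)$ and $\lambda^C(q|p_0)$ exist, then $$\lambda^C(q_0|p_0)+\lambda^C(q|p_0)\le 1.$$
   Context: For a copula $C$ (bivariate distribution function on $[0,1]^2$ with uniform margins) and $p,q\in[0,1]$, let $(U,V)$ have joint distribution function $C$; the $(p,q)$-quantile dependence coefficient is $\lambda^C(q|p)=\lim_{t\to0^+}P((q-t)^+<V\le(q+t)^-\mid (p-t)^+<U\le(p+t)^-)$ when the limit exists, where $a^+=\max(a,0)$ and $a^-=1-(1-a)^+$. *)

(* Defs.v *)
From Stdlib Require Import Reals.
From Coquelicot Require Import Coquelicot.
Open Scope R_scope.

Definition is_copula (C : R -> R -> R) : Prop :=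
  (forall u, 0 <= u <= 1 -> C u 0 = 0 /\ C 0 u = 0 /\ C u 1 = u /\ C 1 u = u) /\
  (forall u1 u2 v1 v2, 0 <= u1 -> u1 <= u2 -> u2 <= 1 ->
     0 <= v1 -> v1 <= v2 -> v2 <= 1 ->
     0 <= C u2 v2 - C u1 v2 - C u2 v1 + C u1 v1).

Definition pos_part (a : R) : R := Rmax a 0.
Definition neg_trunc (a : R) : R := 1 - pos_part (1 - a).

(* P(a < U <= b, c < V <= d) for (U,V) with joint distribution function C *)
Definition C_vol (C : R -> R -> R) (a b c d : R) : R :=
  C b d - C a d - C b c + C a c.

(* P((q-t)^+ < V <= (q+t)^- | (p-t)^+ < U <= (p+t)^-), where
   P((p-t)^+ < U <= (p+t)^-) = (p+t)^- - (p-t)^+ since U is uniform. *)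
Definition cond_prob (C : R -> R -> R) (p q t : R) : R :=
  C_vol C (pos_part (p - t)) (neg_trunc (p + t))
          (pos_part (q - t)) (neg_trunc (q + t))
  / (neg_trunc (p + t) - pos_part (p - t)).

Definition qdc_is (C : R -> R -> R) (p q l : R) : Prop :=
  filterlim (fun t => cond_prob C p q t) (at_right 0) (locally l).

(* Main.v *)
Require Import Defs.
From Stdlib Require Import Reals Lra.
From Coquelicot Require Import Coquelicot.
Open Scope R_scope.

Lemma core (C : R -> R -> R) (p0 q0 q t : R) :
  is_copula C -> 0 <= p0 <= 1 -> 0 <= q0 <= 1 -> 0 <= q <= 1 ->
  q0 < q -> 0 < t -> t < 1 -> 2 * t < q - q0 ->
  cond_prob C p0 q0 t + cond_prob C p0 q t <= 1.
Proof.
  intros [Hm H2] Hp Hq0 Hq Hlt Ht Ht1 Htq.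
  unfold cond_prob, C_vol, neg_trunc, pos_part.
  set (a := Rmax (p0 - t) 0). set (b := 1 - Rmax (1 - (p0 + t)) 0).
  set (c0 := Rmax (q0 - t) 0). set (d0 := 1 - Rmax (1 - (q0 + t)) 0).
  set (c := Rmax (q - t) 0). set (d := 1 - Rmax (1 - (q + t)) 0).
  assert (Ha : 0 <= a) by (unfold a; apply Rmax_r).
  assert (Hab : a < b).
  { unfold a, b. destruct (Rmax_Rle (p0 - t) 0 (Rmax (p0-t) 0)) as [_ _].
    unfold Rmax; repeat destruct Rle_dec; lra. }
  assert (Hb : b <= 1) by (unfold b; pose proof (Rmax_r (1 - (p0 + t)) 0); lra).
  assert (0 <= c0) by (unfold c0; apply Rmax_r).
  assert (c0 <= d0) by (unfold c0, d0, Rmax; repeat destruct Rle_dec; lra).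
  assert (d0 <= c) by (unfold c, d0, Rmax; repeat destruct Rle_dec; lra).
  assert (c <= d) by (unfold c, d, Rmax; repeat destruct Rle_dec; lra).
  assert (d <= 1) by (unfold d, Rmax; repeat destruct Rle_dec; lra).
  pose proof (H2 a b 0 c0 ltac:(lra) ltac:(lra) ltac:(lra) ltac:(lra) ltac:(lra) ltac:(lra)).
  pose proof (H2 a b d0 c ltac:(lra) ltac:(lra) ltac:(lra) ltac:(lra) ltac:(lra) ltac:(lra)).
  pose proof (H2 a b d 1 ltac:(lra) ltac:(lra) ltac:(lra) ltac:(lra) ltac:(lra) ltac:(lra)).
  destruct (Hm a ltac:(lra)) as [A0 [_ [A1 _]]].
  destruct (Hm b ltac:(lra)) as [B0 [_ [B1 _]]].
  rewrite <- Rdiv_plus_distr.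
  apply Rcomplements.Rle_div_l; [lra|].
  lra.
Qed.

Lemma ev (C : R -> R -> R) (p0 q0 q : R) :
  is_copula C -> 0 <= p0 <= 1 -> 0 <= q0 <= 1 -> 0 <= q <= 1 ->
  q0 < q ->
  at_right 0 (fun t => cond_prob C p0 q0 t + cond_prob C p0 q t <= 1).
Proof.
  intros HC Hp Hq0 Hq Hlt.
  assert (Hd : 0 < Rmin 1 ((q - q0)/2)) by (apply Rmin_pos; lra).
  exists (mkposreal _ Hd). intros t Hb Ht.
  unfold ball in Hb; simpl in Hb; unfold AbsRing_ball, abs, minus, plus, opp in Hb; simpl in Hb.
  rewrite Ropp_0, Rplus_0_r, Rabs_right in Hb by lra.
  pose proof (Rmin_l 1 ((q-q0)/2)). pose proof (Rmin_r 1 ((q-q0)/2)).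
  apply core; auto; lra.
Qed.

Theorem proposition4 (C : R -> R -> R) (p0 q0 q l0 l : R) :
  is_copula C ->
  0 <= p0 <= 1 -> 0 <= q0 <= 1 -> 0 <= q <= 1 ->
  q <> q0 ->
  qdc_is C p0 q0 l0 -> qdc_is C p0 q l ->
  l0 + l <= 1.
Proof.
  intros HC Hp Hq0 Hq Hne H0 H1.
  assert (Hev : at_right 0 (fun t => cond_prob C p0 q0 t + cond_prob C p0 q t <= 1)).
  { destruct (Rlt_or_le q0 q) as [h|h].
    - apply ev; auto.
    - eapply filter_imp; [| apply (ev C p0 q q0); auto; lra].
      intros t; simpl; lra. }
  destruct (Rle_or_lt (l0 + l) 1) as [h|h]; [exact h|exfalso].
  assert (He : 0 < (l0 + l - 1) / 2) by lra.
  apply filterlim_locally with (eps := mkposreal _ He) in H0.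
  apply filterlim_locally with (eps := mkposreal _ He) in H1.
  destruct (filter_ex _ (filter_and _ _ Hev (filter_and _ _ H0 H1))) as [t [A [B D]]].
  unfold ball in B, D; simpl in B, D; unfold AbsRing_ball, abs, minus, plus, opp in B, D; simpl in B, D.
  apply Rabs_def2 in B. apply Rabs_def2 in D. lra.
Qed.
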